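(* Let $i,p\ge-1$, $q\ge0$, $0\le j\le 2^i$, $0\le m\le 2^p$, $0\le n\le 2^q$, and let $F(t):=\int_0^t\varphi_{pm}(s)\chi_{qn}(s)\,ds$. Then the coefficient $F_{ij}$ of $F$ satisfies \[ |F_{ij}|\le 2^{-2(i\vee p\vee q)+p+q}, \] except in the case $p<q=i$, in which one has $|F_{ij}|\le1$.
   Context: Index set: pairs $(p,m)$ with either $p=-1,m=0$, or $p\in\mathbb{N}=\{0,1,2,\dots\}$ and $0\le m\le 2^p$. For $p\in\mathbb{N}$, $1\le m\le 2^p$ set $t^0_{pm}=(m-1)2^{-p}$, $t^1_{pm}=(2m-1)2^{-p-1}$, $t^2_{pm}=m2^{-p}$. Rescaled Haar functions: for $p\in\mathbb{N}$, $1\le m\le 2^p$, $\chi_{pm}=2^p$ on $[t^0_{pm},t^1_{pm})$, $=-2^p$ on $[t^1_{pm},t^2_{pm})$, $=0$ elsewhere; $\chi_{00}\equiv1$; $\chi_{p0}\equiv0$ for $p\ge1$. Rescaled Schauder functions: $\varphi_{pm}(t)=\int_0^t\chi_{pm}(s)\,ds$ for $p\in\mathbb{N}$, and $\varphi_{-10}\equiv1$. For continuous $f:[0,1]\to\mathbb{R}$ the coefficients are $f_{-10}=f(0)$, $f_{00}=f(1)-f(0)$, $f_{p0}=0$ for $p\ge1$, $f_{pm}=2f(t^1_{pm})-f(t^0_{pm})-f(t^2_{pm})$ for $p\in\mathbb{N},m\ge1$. $a\vee b=\max(a,b)$. *)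

(* Defs.v *)
From Stdlib Require Import Reals ZArith Lra.
Open Scope R_scope.

Definition t0 (p m : nat) : R := (INR m - 1) / 2 ^ p.
Definition t1 (p m : nat) : R := (2 * INR m - 1) / 2 ^ (S p).
Definition t2 (p m : nat) : R := INR m / 2 ^ p.

Definition chi (p m : nat) (t : R) : R :=
  match m with
  | O => match p with O => 1 | S _ => 0 end
  | S _ =>
      if Rle_dec (t0 p m) t then
        if Rlt_dec t (t1 p m) then 2 ^ p
        else if Rlt_dec t (t2 p m) then - 2 ^ p else 0
      else 0
  end.

Definition index_ok (p : Z) (m : nat) : Prop :=
  (p = (-1)%Z /\ m = O) \/ ((0 <= p)%Z /\ (m <= 2 ^ Z.to_nat p)%nat).

Definition is_primitive (g F : R -> R) : Prop :=
  forall (t : R) (pr : Riemann_integrable g 0 t), F t = RiemannInt pr.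

Definition is_schauder (p : Z) (m : nat) (phi : R -> R) : Prop :=
  if Z.eqb p (-1) then forall t, phi t = 1
  else is_primitive (chi (Z.to_nat p) m) phi.

Definition coef (f : R -> R) (i : Z) (j : nat) : R :=
  if Z.eqb i (-1) then f 0
  else match j with
       | O => if Z.eqb i 0 then f 1 - f 0 else 0
       | S _ => let k := Z.to_nat i in
                2 * f (t1 k j) - f (t0 k j) - f (t2 k j)
       end.

(* Main.v *)
Require Import Defs.
From Stdlib Require Import Reals ZArith Lra Lia List.
From Coquelicot Require Import Coquelicot.
Import ListNotations.
Open Scope R_scope.

Lemma notin_cases (u v b : R) : ~ (u < b < v) -> b <= u \/ v <= b.
Proof. intros H. destruct (Rle_dec b u); [left; lra|]. right.
  destruct (Rle_dec v b); [lra|]. exfalso; apply H; lra. Qed.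

Lemma pw_ex_RInt (f : R -> R) (l : list R) : forall a b, a <= b ->
  (forall u v, a <= u -> u < v -> v <= b -> (forall x, In x l -> ~ (u < x < v)) ->
     exists h : R -> R, (forall z, continuous h z) /\ forall s, u < s < v -> f s = h s) ->
  ex_RInt f a b.
Proof.
  induction l as [|x l IH]; intros a b Hab H.
  - destruct (Req_dec a b) as [->|Hne].
    + apply ex_RInt_point.
    + destruct (H a b) as [h [Hc He]]; try lra. { intros x []. }
      apply (ex_RInt_ext h f).
      { rewrite Rmin_left, Rmax_right by lra. intros; symmetry; auto. }
      apply (@ex_RInt_continuous R_CompleteNormedModule); auto.
  - destruct (Rlt_dec a x) as [Hax|Hax]; [destruct (Rlt_dec x b) as [Hxb|Hxb]|].
    + apply ex_RInt_Chasles with x.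
      * apply IH; [lra|]. intros u v Hu Huv Hv Hl. apply H; try lra.
        intros y [<-|Hy]; [intro; lra|auto].
      * apply IH; [lra|]. intros u v Hu Huv Hv Hl. apply H; try lra.
        intros y [<-|Hy]; [intro; lra|auto].
    + apply IH; auto. intros u v Hu Huv Hv Hl. apply H; try lra.
      intros y [<-|Hy]; [intro; lra|auto].
    + apply IH; auto. intros u v Hu Huv Hv Hl. apply H; try lra.
      intros y [<-|Hy]; [intro; lra|auto].
Qed.

Lemma RInt_split (f : R -> R) a b c : ex_RInt f a b -> ex_RInt f b c ->
  @eq R (RInt f a c) (RInt f a b + RInt f b c).
Proof. intros H1 H2. rewrite <- (RInt_Chasles f a b c); auto. Qed.

Lemma RInt_const_on (f : R -> R) a b c : a <= b -> (forall s, a < s < b -> f s = c) ->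
  @eq R (RInt f a b) (c * (b - a)).
Proof. intros Hab H. rewrite (RInt_ext f (fun _ => c)).
  - rewrite RInt_const. unfold scal; simpl. unfold mult; simpl. ring.
  - rewrite Rmin_left, Rmax_right by lra. auto. Qed.

Lemma pow2_pos k : 0 < 2 ^ k. Proof. apply pow_lt; lra. Qed.

Lemma INR2 : INR 2 = 2. Proof. simpl; lra. Qed.

Lemma dy_out (a b c K : nat) : (a <= b)%nat -> ~ (INR K / 2^b < INR c / 2^a < INR (S K) / 2^b).
Proof.
  intros Hab. assert (E : INR c / 2^a = INR (c * 2^(b-a)) / 2^b).
  { rewrite mult_INR, pow_INR, INR2. replace b with (a + (b-a))%nat at 2 by lia.
    rewrite pow_add. field. split; apply pow_nonzero; lra. }
  rewrite E. pose proof (pow2_pos b) as Hp.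
  destruct (le_lt_dec (c * 2^(b-a)) K) as [H|H].
  - apply le_INR in H. intros [H1 _]. apply (Rmult_lt_compat_r (2^b)) in H1; auto.
    unfold Rdiv in H1. rewrite !Rmult_assoc, Rinv_l in H1 by lra. lra.
  - apply le_INR in H. intros [_ H1]. apply (Rmult_lt_compat_r (2^b)) in H1; auto.
    unfold Rdiv in H1. rewrite !Rmult_assoc, Rinv_l in H1 by lra. lra.
Qed.

Lemma t0_rep k m : (1 <= m)%nat -> t0 k m = INR (2*(m-1)) / 2^(S k).
Proof. intros. unfold t0. rewrite mult_INR, minus_INR by lia. simpl. field. apply pow_nonzero; lra. Qed.
Lemma t0_rep' k m : (1 <= m)%nat -> t0 k m = INR (m-1) / 2^k.
Proof. intros. unfold t0. rewrite minus_INR by lia. simpl. field. apply pow_nonzero; lra. Qed.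
Lemma t1_rep k m : (1 <= m)%nat -> t1 k m = INR (2*m-1) / 2^(S k).
Proof. intros. unfold t1. rewrite minus_INR by lia. rewrite mult_INR. simpl. field. apply pow_nonzero; lra. Qed.
Lemma t2_rep k m : t2 k m = INR (2*m) / 2^(S k).
Proof. intros. unfold t2. rewrite mult_INR. simpl. field. apply pow_nonzero; lra. Qed.
Lemma t2_rep' k m : (1 <= m)%nat -> t2 k m = INR (S (m-1)) / 2^k.
Proof. intros. unfold t2. f_equal. f_equal. lia. Qed.

Lemma t_order k m : t1 k m - t0 k m = / 2^(S k) /\ t2 k m - t1 k m = / 2^(S k).
Proof. unfold t0, t1, t2. simpl. pose proof (pow2_pos k). split; field; lra. Qed.

Lemma chi_bound k n s : Rabs (chi k n s) <= 2^k.
Proof. pose proof (pow2_pos k). unfold chi. destruct n.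
  - destruct k; cbv beta iota; unfold Rabs; destruct Rcase_abs; simpl in *; lra.
  - repeat (destruct Rle_dec || destruct Rlt_dec); unfold Rabs; destruct Rcase_abs; lra.
Qed.

Lemma chi_agree k n u v s w :
  ~ (u < t0 k n < v) -> ~ (u < t1 k n < v) -> ~ (u < t2 k n < v) ->
  u < s < v -> u < w < v -> chi k n s = chi k n w.
Proof. intros H0 H1 H2 Hs Hw. apply notin_cases in H0, H1, H2.
  unfold chi. destruct n; [reflexivity|].
  repeat (destruct Rle_dec || destruct Rlt_dec); lra.
Qed.

Lemma chi_zero k n s : (1 <= n)%nat -> s < t0 k n \/ t2 k n <= s -> chi k n s = 0.
Proof. intros Hn Hs. destruct (t_order k n). pose proof (pow2_pos (S k)).
  assert (0 < / 2 ^ S k) by (apply Rinv_0_lt_compat; lra).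
  unfold chi. destruct n; [lia|].
  repeat (destruct Rle_dec || destruct Rlt_dec); lra.
Qed.

Lemma chi_left k n s : (1 <= n)%nat -> t0 k n < s < t1 k n -> chi k n s = 2^k.
Proof. intros Hn Hs. unfold chi. destruct n; [lia|].
  repeat (destruct Rle_dec || destruct Rlt_dec); lra. Qed.

Lemma chi_right k n s : (1 <= n)%nat -> t1 k n < s < t2 k n -> chi k n s = - 2^k.
Proof. intros Hn Hs. destruct (t_order k n). unfold chi. destruct n; [lia|].
  repeat (destruct Rle_dec || destruct Rlt_dec); lra. Qed.

Lemma chi_ex_RInt k n a b : a <= b -> ex_RInt (chi k n) a b.
Proof. intros Hab. apply (pw_ex_RInt _ [t0 k n; t1 k n; t2 k n]); auto.
  intros u v Hu Huv Hv Hl. exists (fun _ => chi k n ((u+v)/2)). split.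
  - intros; apply continuous_const.
  - intros s Hs. apply (chi_agree k n u v); try apply Hl; simpl; auto; lra.
Qed.

Definition PhiN (k m : nat) (s : R) : R :=
  match m with
  | O => match k with O => s | _ => 0 end
  | S _ => if Rle_dec s (t0 k m) then 0
           else if Rle_dec s (t1 k m) then 2^k * (s - t0 k m)
           else if Rle_dec s (t2 k m) then 2^k * (t2 k m - s) else 0
  end.

Definition SlN (k m : nat) (s : R) : R :=
  match m with
  | O => match k with O => 1 | _ => 0 end
  | S _ => if Rle_dec s (t0 k m) then 0
           else if Rle_dec s (t1 k m) then 2^k
           else if Rle_dec s (t2 k m) then - 2^k else 0
  end.

Lemma PhiN_S k m s : (1 <= m)%nat -> PhiN k m s =
  (if Rle_dec s (t0 k m) then 0
           else if Rle_dec s (t1 k m) then 2^k * (s - t0 k m)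
           else if Rle_dec s (t2 k m) then 2^k * (t2 k m - s) else 0).
Proof. intros; destruct m; [lia|reflexivity]. Qed.

Lemma t0_nonneg k m : (1 <= m)%nat -> 0 <= t0 k m.
Proof. intros. rewrite t0_rep'; auto. pose proof (pow2_pos k). apply Rdiv_le_0_compat; auto. apply pos_INR. Qed.

Lemma phi_formula k m s : 0 <= s -> ex_RInt (chi k m) 0 s /\ @eq R (RInt (chi k m) 0 s) (PhiN k m s).
Proof.
  intros Hs. split; [apply chi_ex_RInt; auto|].
  destruct m as [|m'].
  - unfold PhiN. destruct k.
    + rewrite (RInt_const_on (chi 0 0) 0 s 1 Hs (fun _ _ => eq_refl)). ring.
    + rewrite (RInt_const_on (chi (S k) 0) 0 s 0 Hs (fun _ _ => eq_refl)). ring.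
  - set (m := S m'). assert (Hm : (1 <= m)%nat) by (unfold m; lia).
    pose proof (t0_nonneg k m Hm). destruct (t_order k m) as [E1 E2].
    pose proof (pow2_pos (S k)). assert (0 < / 2 ^ S k) by (apply Rinv_0_lt_compat; lra).
    assert (Hk: 2^k * / 2^(S k) = /2) by (simpl; field; apply pow_nonzero; lra).
    assert (Z0 : forall a b, a <= b -> b <= t0 k m -> @eq R (RInt (chi k m) a b) (0)).
    { intros a b Hab Hb. rewrite (RInt_const_on _ a b 0); auto; [ring|].
      intros x Hx. apply chi_zero; auto; lra. }
    assert (ZL : forall a b, t0 k m <= a -> a <= b -> b <= t1 k m -> @eq R (RInt (chi k m) a b) (2^k*(b-a))).
    { intros a b Ha Hab Hb. apply RInt_const_on; auto. intros x Hx. apply chi_left; auto; lra. }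
    assert (ZR : forall a b, t1 k m <= a -> a <= b -> b <= t2 k m -> @eq R (RInt (chi k m) a b) (-2^k*(b-a))).
    { intros a b Ha Hab Hb. apply RInt_const_on; auto. intros x Hx. apply chi_right; auto; lra. }
    assert (Z2 : forall a b, t2 k m <= a -> a <= b -> @eq R (RInt (chi k m) a b) (0)).
    { intros a b Ha Hab. rewrite (RInt_const_on _ a b 0); auto; [ring|].
      intros x Hx. apply chi_zero; auto; lra. }
    assert (X : forall a b, a <= b -> ex_RInt (chi k m) a b) by (intros; apply chi_ex_RInt; auto).
    rewrite PhiN_S by auto.
    destruct (Rle_dec s (t0 k m)); [apply Z0; lra|].
    rewrite (RInt_split _ 0 (t0 k m) s) by (apply X; lra). rewrite Z0 by lra.
    destruct (Rle_dec s (t1 k m)); [rewrite ZL by lra; ring|].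
    rewrite (RInt_split _ (t0 k m) (t1 k m) s) by (apply X; lra). rewrite ZL by lra.
    destruct (Rle_dec s (t2 k m)); [rewrite ZR by lra; rewrite Rplus_0_l; transitivity (2^k * (t1 k m - t0 k m) - 2^k * (s - t1 k m)); [ring|]; rewrite E1; replace (t2 k m) with (t1 k m + / 2^(S k)) by lra; ring|].
    rewrite (RInt_split _ (t1 k m) (t2 k m) s) by (apply X; lra). rewrite ZR, Z2 by lra. nra.
Qed.

Lemma PhiN_bound k m s : 0 <= s <= 1 -> Rabs (PhiN k m s) <= 1.
Proof. intros Hs. unfold PhiN. destruct m as [|m'].
  - destruct k; rewrite ?Rabs_R0, ?Rabs_pos_eq; lra.
  - set (m := S m'). fold m. destruct (t_order k m) as [E1 E2].
    pose proof (pow2_pos (S k)). pose proof (pow2_pos k).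
    assert (Hk: 2^k * / 2^(S k) = /2) by (simpl; field; apply pow_nonzero; lra).
    repeat destruct Rle_dec; rewrite ?Rabs_R0; try lra; rewrite Rabs_pos_eq; nra.
Qed.

Lemma SlN_bound k m s : Rabs (SlN k m s) <= 2^k.
Proof. pose proof (pow2_pos k). unfold SlN. destruct m.
  - destruct k; cbv beta iota; unfold Rabs; destruct Rcase_abs; simpl in *; lra.
  - repeat destruct Rle_dec; unfold Rabs; destruct Rcase_abs; lra.
Qed.

Lemma PhiN_agree k m u v s w :
  ~ (u < t0 k m < v) -> ~ (u < t1 k m < v) -> ~ (u < t2 k m < v) ->
  u < s < v -> u < w < v -> PhiN k m s = PhiN k m w + SlN k m w * (s - w).
Proof. intros H0 H1 H2 Hs Hw. apply notin_cases in H0, H1, H2.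
  unfold PhiN, SlN. destruct m.
  - destruct k; ring.
  - repeat destruct Rle_dec; try ring; lra.
Qed.

Lemma PhiN_zero k m s : (1 <= m)%nat -> s <= t0 k m \/ t2 k m <= s -> PhiN k m s = 0.
Proof. intros Hm Hs. destruct (t_order k m). pose proof (pow2_pos (S k)).
  assert (0 < / 2 ^ S k) by (apply Rinv_0_lt_compat; lra).
  unfold PhiN. destruct m; [lia|].
  repeat destruct Rle_dec; try lra. assert (s = t2 k (S m)) by lra. subst. ring.
Qed.

Definition phimodel (phi : R -> R) (BP : list R) (L : nat) (sl : R -> R) (A : R) : Prop :=
  (forall s, 0 <= s <= 1 -> Rabs (phi s) <= 1) /\
  (forall b, In b BP -> exists c, b = INR c / 2^L) /\
  0 <= A /\ (forall w, Rabs (sl w) <= A) /\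
  (forall u v s w, 0 <= u -> v <= 1 -> (forall b, In b BP -> ~ (u < b < v)) ->
     u < s < v -> u < w < v -> phi s = phi w + sl w * (s - w)).

Lemma cont_aff (A al c w : R) z : continuous (fun s => (A + al * (s - w)) * c) z.
Proof. apply (@ex_derive_continuous R_AbsRing R_NormedModule). auto_derive. auto. Qed.

Lemma g_ex phi BP L sl A q n a b : phimodel phi BP L sl A -> 0 <= a -> a <= b -> b <= 1 ->
  ex_RInt (fun s => phi s * chi q n s) a b /\ ex_RInt (fun s => Rabs (phi s * chi q n s)) a b.
Proof.
  intros [H1 [H2 [H3 [H4 H5]]]] Ha Hab Hb.
  assert (AG : forall u v s, a <= u -> u < v -> v <= b ->
     (forall x, In x (BP ++ [t0 q n; t1 q n; t2 q n]) -> ~ (u < x < v)) -> u < s < v ->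
     phi s * chi q n s = (phi ((u+v)/2) + sl ((u+v)/2) * (s - (u+v)/2)) * chi q n ((u+v)/2)).
  { intros u v s Hu Huv Hv Hl Hs.
    rewrite (H5 u v s ((u+v)/2)); try lra.
    - f_equal. apply (chi_agree q n u v); try lra; apply Hl; apply in_or_app; right; simpl; tauto.
    - intros b0 Hb0; apply Hl; apply in_or_app; left; auto. }
  split; apply (pw_ex_RInt _ (BP ++ [t0 q n; t1 q n; t2 q n])); auto;
  intros u v Hu Huv Hv Hl.
  - exists (fun s => (phi ((u+v)/2) + sl ((u+v)/2) * (s - (u+v)/2)) * chi q n ((u+v)/2)).
    split; [intros z; apply cont_aff|]. intros s Hs. apply AG; auto.
  - exists (fun s => Rabs ((phi ((u+v)/2) + sl ((u+v)/2) * (s - (u+v)/2)) * chi q n ((u+v)/2))).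
    split; [intros z; apply continuous_Rabs_comp; apply cont_aff|]. intros s Hs. f_equal. apply AG; auto.
Qed.

Lemma g_bound phi BP L sl A q n s : phimodel phi BP L sl A -> 0 <= s <= 1 ->
  Rabs (phi s * chi q n s) <= 2^q.
Proof. intros [H1 _] Hs. rewrite Rabs_mult. pose proof (H1 s Hs). pose proof (chi_bound q n s).
  pose proof (Rabs_pos (phi s)). pose proof (Rabs_pos (chi q n s)). nra. Qed.

Lemma RInt_le_const (f : R -> R) a b C : a <= b -> ex_RInt f a b ->
  (forall s, a <= s <= b -> f s <= C) -> RInt f a b <= (b - a) * C.
Proof. intros Hab Hex H.
  assert (E : @eq R (RInt (fun _ => C) a b) ((b - a) * C)).
  { rewrite RInt_const. reflexivity. }
  rewrite <- E. apply RInt_le; auto. apply ex_RInt_const. intros; apply H; lra. Qed.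

Lemma form_abs (f : R -> R) a mid b e : a <= mid -> mid <= b -> Rabs e = 1 ->
  ex_RInt f a mid -> ex_RInt f mid b ->
  ex_RInt (fun t => Rabs (f t)) a mid -> ex_RInt (fun t => Rabs (f t)) mid b ->
  Rabs (RInt f a mid + e * RInt f mid b) <= RInt (fun t => Rabs (f t)) a b.
Proof. intros H1 H2 He X1 X2 X3 X4.
  rewrite (RInt_split _ a mid b) by auto.
  pose proof (abs_RInt_le f a mid H1 X1). pose proof (abs_RInt_le f mid b H2 X2).
  eapply Rle_trans; [apply Rabs_triang|]. rewrite Rabs_mult, He. lra. Qed.

Lemma RInt_abs_mono (f : R -> R) a b c d : c <= a -> a <= b -> b <= d ->
  (forall x y, c <= x -> x <= y -> y <= d -> ex_RInt f x y) ->
  (forall s, 0 <= f s) -> RInt f a b <= RInt f c d.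
Proof. intros H1 H2 H3 X P.
  rewrite (RInt_split f c a d) by (apply X; lra).
  rewrite (RInt_split f a b d) by (apply X; lra).
  assert (0 <= RInt f c a) by (apply RInt_ge_0; auto; apply X; lra).
  assert (0 <= RInt f b d) by (apply RInt_ge_0; auto; apply X; lra). lra. Qed.

Lemma E_in (f : R -> R) lo hi u v : u <= lo -> lo <= hi -> hi <= v ->
  (forall x y, u <= x -> x <= y -> y <= v -> ex_RInt f x y) ->
  (forall s, u <= s <= v -> s < lo \/ hi < s -> f s = 0) ->
  @eq R (RInt f u v) (RInt f lo hi).
Proof. intros H1 H2 H3 X Z.
  rewrite (RInt_split f u lo v) by (apply X; lra).
  rewrite (RInt_split f lo hi v) by (apply X; lra).
  rewrite (RInt_const_on f u lo 0), (RInt_const_on f hi v 0); auto; try ring;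
  intros s Hs; apply Z; lra. Qed.

Lemma E_out (f : R -> R) lo hi u v : u <= v -> v <= lo \/ hi <= u ->
  (forall s, u <= s <= v -> s < lo \/ hi < s -> f s = 0) ->
  @eq R (RInt f u v) 0.
Proof. intros H1 H2 Z. rewrite (RInt_const_on f u v 0); auto; try ring.
  intros s Hs; apply Z; lra. Qed.

Lemma RInt_affine (A al c x0 a b : R) :
  @eq R (RInt (fun s => (A + al * (s - x0)) * c) a b)
        (c * (A * (b - a) + al * ((b - x0)^2 - (a - x0)^2) / 2)).
Proof.
  set (G := fun s => c * (A * s + al * (s - x0)^2 / 2)).
  assert (H : is_RInt (fun s => (A + al * (s - x0)) * c) a b (minus (G b) (G a))).
  { apply (is_RInt_derive G).
    - intros x _. unfold G. auto_derive; auto. match goal with |- ?a = ?b => change (@eq R a b) end. field.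
    - intros x _. apply cont_aff. }
  rewrite (is_RInt_unique _ _ _ _ H). unfold G, minus, plus, opp; simpl. match goal with |- ?G => idtac G end. field.
Qed.

Lemma pz_mono (z1 z2 : Z) : (z1 <= z2)%Z -> powerRZ 2 z1 <= powerRZ 2 z2.
Proof. intros H. replace z2 with (z1 + Z.of_nat (Z.to_nat (z2 - z1)))%Z by lia.
  rewrite powerRZ_add by lra. rewrite <- pow_powerRZ.
  pose proof (powerRZ_lt 2 z1 ltac:(lra)).
  assert (1 <= 2 ^ Z.to_nat (z2 - z1)).
  { clear. induction (Z.to_nat (z2 - z1)); simpl; lra. }
  nra. Qed.

Lemma pz_frac (x y : nat) : 2^x * / 2^y = powerRZ 2 (Z.of_nat x - Z.of_nat y).
Proof. unfold Z.sub. rewrite powerRZ_add, powerRZ_neg', <- !pow_powerRZ by lra. reflexivity. Qed.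

Lemma pow2_le1 (j i : nat) : (j <= 2^i)%nat -> INR j / 2^i <= 1.
Proof. intros H. apply le_INR in H. rewrite pow_INR, INR2 in H. pose proof (pow2_pos i).
  apply Rmult_le_reg_r with (2^i); auto. unfold Rdiv. rewrite Rmult_assoc, Rinv_l; lra. Qed.

Lemma F_eq phi BP L sl A q n F t : phimodel phi BP L sl A ->
  is_primitive (fun s => phi s * chi q n s) F -> 0 <= t <= 1 ->
  F t = RInt (fun s => phi s * chi q n s) 0 t.
Proof. intros HM HF Ht. destruct (g_ex phi BP L sl A q n 0 t HM) as [X _]; try lra.
  rewrite (HF t (ex_RInt_Reals_0 _ _ _ X)). rewrite <- RInt_Reals. reflexivity. Qed.

Lemma coef_form1 phi BP L sl A q n F i j : phimodel phi BP L sl A ->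
  is_primitive (fun s => phi s * chi q n s) F -> (1 <= j)%nat -> (j <= 2^i)%nat ->
  coef F (Z.of_nat i) j =
  RInt (fun s => phi s * chi q n s) (t0 i j) (t1 i j) +
  (-1) * RInt (fun s => phi s * chi q n s) (t1 i j) (t2 i j).
Proof. intros HM HF Hj Hj2.
  assert (Z.eqb (Z.of_nat i) (-1) = false) by (apply Z.eqb_neq; lia).
  unfold coef. rewrite H. destruct j as [|j']; [lia|]. rewrite Nat2Z.id.
  set (j := S j') in *.
  pose proof (t0_nonneg i j Hj). destruct (t_order i j).
  pose proof (pow2_pos (S i)). assert (0 < / 2 ^ S i) by (apply Rinv_0_lt_compat; lra).
  assert (t2 i j <= 1) by (unfold t2; apply pow2_le1; auto).
  rewrite !(F_eq phi BP L sl A q n F) by (auto; lra).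
  destruct (g_ex phi BP L sl A q n 0 (t0 i j) HM) as [X1 _]; try lra.
  destruct (g_ex phi BP L sl A q n (t0 i j) (t1 i j) HM) as [X2 _]; try lra.
  destruct (g_ex phi BP L sl A q n (t1 i j) (t2 i j) HM) as [X3 _]; try lra.
  rewrite (RInt_split _ 0 (t0 i j) (t1 i j)) by auto.
  rewrite (RInt_split _ 0 (t1 i j) (t2 i j)) by (auto; eapply ex_RInt_Chasles; eauto).
  rewrite (RInt_split _ 0 (t0 i j) (t1 i j)) by auto. ring.
Qed.

Lemma coef_form0 phi BP L sl A q n F : phimodel phi BP L sl A ->
  is_primitive (fun s => phi s * chi q n s) F ->
  coef F 0 0 =
  RInt (fun s => phi s * chi q n s) 0 (1/2) + 1 * RInt (fun s => phi s * chi q n s) (1/2) 1.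
Proof. intros HM HF. unfold coef. simpl.
  rewrite !(F_eq phi BP L sl A q n F) by (auto; lra).
  destruct (g_ex phi BP L sl A q n 0 (1/2) HM) as [X1 _]; try lra.
  destruct (g_ex phi BP L sl A q n (1/2) 1 HM) as [X2 _]; try lra.
  rewrite (RInt_split _ 0 (1/2) 1) by auto. assert (E0 : @eq R (RInt (fun s => phi s * chi q n s) 0 0) 0) by (rewrite RInt_point; reflexivity). rewrite E0. ring.
Qed.

Lemma coef_zero phi BP L sl A q n F i : phimodel phi BP L sl A ->
  is_primitive (fun s => phi s * chi q n s) F -> (1 <= i)%nat -> coef F (Z.of_nat i) 0 = 0.
Proof. intros. unfold coef. replace (Z.eqb (Z.of_nat i) (-1)) with false by (symmetry; apply Z.eqb_neq; lia).
  replace (Z.eqb (Z.of_nat i) 0) with false by (symmetry; apply Z.eqb_neq; lia). reflexivity. Qed.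

Lemma coef_m1 phi BP L sl A q n F j : phimodel phi BP L sl A ->
  is_primitive (fun s => phi s * chi q n s) F -> coef F (-1) j = 0.
Proof. intros HM HF. unfold coef. simpl. rewrite (F_eq phi BP L sl A q n F) by (auto; lra).
  assert (E0 : @eq R (RInt (fun s => phi s * chi q n s) 0 0) 0) by (rewrite RInt_point; reflexivity). rewrite E0. reflexivity. Qed.

Lemma RInt_ext_open (f h : R -> R) a b : a <= b -> (forall x, a < x < b -> f x = h x) ->
  @eq R (RInt f a b) (RInt h a b).
Proof. intros Hab H. apply RInt_ext. rewrite Rmin_left, Rmax_right by lra. auto. Qed.

Lemma Bnd_gen phi BP L sl A q n a mid b e : phimodel phi BP L sl A ->
  0 <= a -> a <= mid -> mid <= b -> b <= 1 -> Rabs e = 1 ->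
  Rabs (RInt (fun s => phi s * chi q n s) a mid + e * RInt (fun s => phi s * chi q n s) mid b)
  <= RInt (fun s => Rabs (phi s * chi q n s)) a b.
Proof. intros HM H1 H2 H3 H4 He.
  destruct (g_ex phi BP L sl A q n a mid HM) as [X1 Y1]; try lra.
  destruct (g_ex phi BP L sl A q n mid b HM) as [X2 Y2]; try lra.
  apply form_abs; auto. Qed.

Lemma Bnd1 phi BP L sl A q n a b : phimodel phi BP L sl A -> 0 <= a -> a <= b -> b <= 1 ->
  RInt (fun s => Rabs (phi s * chi q n s)) a b <= (b - a) * 2^q.
Proof. intros HM H1 H2 H3. destruct (g_ex phi BP L sl A q n a b HM) as [_ Y]; try lra.
  apply RInt_le_const; auto. intros s Hs. apply (g_bound phi BP L sl A); auto; lra. Qed.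

Lemma Bnd2 phi BP L sl A q n a b lo hi : phimodel phi BP L sl A -> 0 <= a -> a <= b -> b <= 1 ->
  0 <= lo -> lo <= hi -> hi <= 1 ->
  (forall s, 0 <= s <= 1 -> s < lo \/ hi < s -> phi s = 0) ->
  RInt (fun s => Rabs (phi s * chi q n s)) a b <= (hi - lo) * 2^q.
Proof. intros HM H1 H2 H3 H4 H5 H6 Z.
  assert (X : forall x y, 0 <= x -> x <= y -> y <= 1 -> ex_RInt (fun s => Rabs (phi s * chi q n s)) x y).
  { intros x y ? ? ?. apply (g_ex phi BP L sl A q n x y HM); auto. }
  eapply Rle_trans.
  { apply (RInt_abs_mono _ a b 0 1); try lra; intros; first [apply X; lra | apply Rabs_pos]. }
  rewrite (E_in _ lo hi 0 1); try lra.
  all: first [ apply (Bnd1 phi BP L sl A); auto; lra | intros x y ? ? ?; apply X; lra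
             | intros s Hs Hs'; rewrite Z; auto; rewrite Rmult_0_l, Rabs_R0; auto ].
Qed.

Lemma BPout phi BP L sl A lev K : phimodel phi BP L sl A -> (L <= lev)%nat ->
  forall b, In b BP -> ~ (INR K / 2^lev < b < INR (S K) / 2^lev).
Proof. intros [_ [H2 _]] HL b Hb. destruct (H2 b Hb) as [c ->]. apply dy_out; auto. Qed.

Lemma BndY phi BP L sl A q n a mid b e : phimodel phi BP L sl A ->
  (1 <= n)%nat -> (n <= 2^q)%nat -> (L <= q)%nat ->
  0 <= a -> a <= mid -> mid <= b -> b <= 1 -> Rabs e = 1 ->
  ~ (t0 q n < a < t2 q n) -> ~ (t0 q n < mid < t2 q n) -> ~ (t0 q n < b < t2 q n) ->
  Rabs (RInt (fun s => phi s * chi q n s) a mid + e * RInt (fun s => phi s * chi q n s) mid b)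
  <= 2 * (2^q * A * (/ 2^(S q))^2).
Proof.
  intros HM Hn Hn2 HL H1 H2 H3 H4 He Oa Om Ob.
  set (g := fun s => phi s * chi q n s).
  set (lo := t0 q n). set (hi := t2 q n). set (w := t1 q n).
  pose proof (t0_nonneg q n Hn) as Hlo. destruct (t_order q n) as [E1 E2].
  pose proof (pow2_pos (S q)). assert (Hh : 0 < / 2 ^ S q) by (apply Rinv_0_lt_compat; lra).
  assert (Hhi : hi <= 1) by (unfold hi, t2; apply pow2_le1; auto).
  fold lo hi w in E1, E2, Hlo, Oa, Om, Ob.
  assert (X : forall x y, 0 <= x -> x <= y -> y <= 1 -> ex_RInt g x y).
  { intros x y ? ? ?. apply (g_ex phi BP L sl A q n x y HM); auto. }
  assert (Zg : forall s, s < lo \/ hi < s -> g s = 0).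
  { intros s Hs. unfold g. rewrite chi_zero; auto; [ring|]. fold lo hi; lra. }
  assert (P : forall x y, 0 <= x -> x <= y -> y <= 1 -> ~ (lo < x < hi) -> ~ (lo < y < hi) ->
     Rabs (RInt g x y) <= Rabs (RInt g lo hi)).
  { intros x y Hx Hxy Hy Ox Oy. apply notin_cases in Ox, Oy.
    destruct (Rle_dec y lo) as [Hyl|Hyl]; [|destruct (Rle_dec hi x) as [Hxh|Hxh]].
    - rewrite (E_out g lo hi x y); auto. rewrite Rabs_R0; apply Rabs_pos.
    - rewrite (E_out g lo hi x y); auto. rewrite Rabs_R0; apply Rabs_pos.
    - rewrite (E_in g lo hi x y); try lra. intros; apply X; lra. intros; apply Zg; auto. }
  assert (HM' := HM). destruct HM' as [_ [_ [HA [Hsl H5]]]].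
  assert (BO : forall b0, In b0 BP -> ~ (lo < b0 < hi)).
  { unfold lo, hi. rewrite t0_rep', t2_rep' by auto. apply (BPout phi BP L sl A); auto. }
  assert (V : Rabs (RInt g lo hi) <= 2^q * A * (/ 2^(S q))^2).
  { rewrite (RInt_split g lo w hi) by (apply X; lra).
    rewrite (RInt_ext_open g (fun s => (phi w + sl w * (s - w)) * 2^q) lo w) by
      (try lra; intros x Hx; unfold g; rewrite (H5 lo hi x w); auto; try lra;
       rewrite chi_left; auto; fold lo w; lra).
    rewrite (RInt_ext_open g (fun s => (phi w + sl w * (s - w)) * (- 2^q)) w hi) by
      (try lra; intros x Hx; unfold g; rewrite (H5 lo hi x w); auto; try lra;
       rewrite chi_right; auto; fold w hi; lra).
    rewrite !RInt_affine.
    replace (lo - w) with (- / 2^(S q)) by lra. replace (hi - w) with (/ 2^(S q)) by lra.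
    replace (w - lo) with (/ 2^(S q)) by lra.
    replace (2 ^ q * (phi w * / 2 ^ S q + sl w * ((w - w) ^ 2 - (- / 2 ^ S q) ^ 2) / 2) +
      - 2 ^ q * (phi w * / 2 ^ S q + sl w * ((/ 2 ^ S q) ^ 2 - (w - w) ^ 2) / 2))
      with (- (2^q * sl w * (/ 2^(S q))^2)) by (field; try (apply pow_nonzero; lra)).
    rewrite Rabs_Ropp, !Rabs_mult, (Rabs_pos_eq (2^q)) by (apply pow_le; lra).
    rewrite (Rabs_pos_eq ((/ 2^(S q))^2)) by (apply pow_le; lra).
    pose proof (Hsl w). pose proof (pow2_pos q).
    apply Rmult_le_compat_r; [apply pow_le; lra|]. apply Rmult_le_compat_l; lra. }
  eapply Rle_trans; [apply Rabs_triang|]. rewrite Rabs_mult, He, Rmult_1_l.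
  pose proof (P a mid H1 H2 ltac:(lra) Oa Om). pose proof (P mid b ltac:(lra) H3 H4 Om Ob).
  fold g. lra.
Qed.

Lemma BndX phi BP L sl A q n i j : phimodel phi BP L sl A ->
  (1 <= j)%nat -> (j <= 2^i)%nat -> (L <= i)%nat -> (S q <= i)%nat ->
  Rabs (RInt (fun s => phi s * chi q n s) (t0 i j) (t1 i j) +
        (-1) * RInt (fun s => phi s * chi q n s) (t1 i j) (t2 i j))
  <= 2^q * A * (/ 2^(S i))^2.
Proof.
  intros HM Hj Hj2 HL Hq.
  set (g := fun s => phi s * chi q n s).
  set (lo := t0 i j). set (hi := t2 i j). set (w := t1 i j).
  pose proof (t0_nonneg i j Hj) as Hlo. destruct (t_order i j) as [E1 E2].
  pose proof (pow2_pos (S i)). assert (Hh : 0 < / 2 ^ S i) by (apply Rinv_0_lt_compat; lra).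
  assert (Hhi : hi <= 1) by (unfold hi, t2; apply pow2_le1; auto).
  fold lo hi w in E1, E2, Hlo.
  assert (X : forall x y, 0 <= x -> x <= y -> y <= 1 -> ex_RInt g x y).
  { intros x y ? ? ?. apply (g_ex phi BP L sl A q n x y HM); auto. }
  assert (HM' := HM). destruct HM' as [_ [_ [HA [Hsl H5]]]].
  assert (BO : forall b0, In b0 BP -> ~ (lo < b0 < hi)).
  { unfold lo, hi. rewrite t0_rep', t2_rep' by auto. apply (BPout phi BP L sl A); auto. }
  assert (CA : forall s, lo < s < hi -> chi q n s = chi q n w).
  { intros s Hs. destruct n as [|n']; [reflexivity|].
    assert (DO : forall c, ~ (lo < INR c / 2^(S q) < hi)).
    { intros c. unfold lo, hi. rewrite t0_rep', t2_rep' by auto. apply dy_out. lia. }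
    apply (chi_agree q (S n') lo hi); auto; try lra.
    - rewrite t0_rep by lia. apply DO.
    - rewrite t1_rep by lia. apply DO.
    - rewrite t2_rep. apply DO. }
  assert (GA : forall s, lo < s < hi -> g s = (phi w + sl w * (s - w)) * chi q n w).
  { intros s Hs. unfold g. rewrite (H5 lo hi s w), CA; auto; lra. }
  rewrite (RInt_ext_open g (fun s => (phi w + sl w * (s - w)) * chi q n w) lo w)
    by (try lra; intros; apply GA; lra).
  rewrite (RInt_ext_open g (fun s => (phi w + sl w * (s - w)) * chi q n w) w hi)
    by (try lra; intros; apply GA; lra).
  rewrite !RInt_affine.
  replace (lo - w) with (- / 2^(S i)) by lra. replace (hi - w) with (/ 2^(S i)) by lra.
  replace (w - lo) with (/ 2^(S i)) by lra.
  replace (chi q n w * (phi w * / 2 ^ S i + sl w * ((w - w) ^ 2 - (- / 2 ^ S i) ^ 2) / 2) +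
    -1 * (chi q n w * (phi w * / 2 ^ S i + sl w * ((/ 2 ^ S i) ^ 2 - (w - w) ^ 2) / 2)))
    with (- (chi q n w * sl w * (/ 2^(S i))^2)) by (field; try (apply pow_nonzero; lra)).
  rewrite Rabs_Ropp, !Rabs_mult.
  rewrite (Rabs_pos_eq ((/ 2^(S i))^2)) by (apply pow_le; lra).
  pose proof (Hsl w). pose proof (chi_bound q n w). pose proof (Rabs_pos (sl w)). pose proof (Rabs_pos (chi q n w)).
  apply Rmult_le_compat_r; [apply pow_le; lra|]. apply Rmult_le_compat; auto.
Qed.

Lemma P1 x : 2^x = powerRZ 2 (Z.of_nat x). Proof. apply pow_powerRZ. Qed.
Lemma P2 x : / 2^x = powerRZ 2 (- Z.of_nat x). Proof. rewrite powerRZ_neg', <- P1. reflexivity. Qed.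

Lemma bY (A : R) (pZ : Z) (q : nat) : 0 <= A <= powerRZ 2 pZ ->
  2 * (2^q * A * (/ 2^(S q))^2) <= powerRZ 2 (pZ - Z.of_nat q - 1).
Proof. intros HA.
  replace (pZ - Z.of_nat q - 1)%Z with (1 + Z.of_nat q + pZ + - Z.of_nat (S q) + - Z.of_nat (S q))%Z by lia.
  rewrite !powerRZ_add by lra. rewrite <- P1, <- !P2. simpl (powerRZ 2 1).
  pose proof (pow2_pos q). pose proof (pow2_pos (S q)).
  assert (0 < / 2^(S q)) by (apply Rinv_0_lt_compat; lra).
  assert (0 < 2 ^ q * / 2 ^ S q * / 2 ^ S q) by (apply Rmult_lt_0_compat; [apply Rmult_lt_0_compat|]; lra).
  replace (2 * (2 ^ q * A * (/ 2 ^ S q) ^ 2)) with (2 * 1 * (2 ^ q * / 2 ^ S q * / 2 ^ S q) * A) by ring.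
  replace (2 * 1 * 2 ^ q * powerRZ 2 pZ * / 2 ^ S q * / 2 ^ S q) with (2 * 1 * (2 ^ q * / 2 ^ S q * / 2 ^ S q) * powerRZ 2 pZ) by ring.
  apply Rmult_le_compat_l; lra.
Qed.

Lemma bX (A : R) (pZ : Z) (q i : nat) : 0 <= A <= powerRZ 2 pZ ->
  2^q * A * (/ 2^(S i))^2 <= powerRZ 2 (Z.of_nat q + pZ - 2 * Z.of_nat (S i)).
Proof. intros HA.
  replace (Z.of_nat q + pZ - 2 * Z.of_nat (S i))%Z with (Z.of_nat q + pZ + - Z.of_nat (S i) + - Z.of_nat (S i))%Z by lia.
  rewrite !powerRZ_add by lra. rewrite <- P1, <- !P2.
  pose proof (pow2_pos q). pose proof (pow2_pos (S i)).
  assert (0 < / 2^(S i)) by (apply Rinv_0_lt_compat; lra).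
  assert (0 < 2 ^ q * / 2 ^ S i * / 2 ^ S i) by (apply Rmult_lt_0_compat; [apply Rmult_lt_0_compat|]; lra).
  replace (2 ^ q * A * (/ 2 ^ S i) ^ 2) with ((2 ^ q * / 2 ^ S i * / 2 ^ S i) * A) by ring.
  replace (2 ^ q * powerRZ 2 pZ * / 2 ^ S i * / 2 ^ S i) with ((2 ^ q * / 2 ^ S i * / 2 ^ S i) * powerRZ 2 pZ) by ring.
  apply Rmult_le_compat_l; lra.
Qed.

Lemma b1 (q i : nat) : / 2^i * 2^q = powerRZ 2 (Z.of_nat q - Z.of_nat i).
Proof. rewrite <- pz_frac. ring. Qed.

Lemma b2 (pZ : Z) (q : nat) (d : R) : d <= powerRZ 2 (- pZ) -> d * 2^q <= powerRZ 2 (Z.of_nat q - pZ).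
Proof. intros H. replace (Z.of_nat q - pZ)%Z with (- pZ + Z.of_nat q)%Z by lia.
  rewrite powerRZ_add, <- P1 by lra. pose proof (pow2_pos q). apply Rmult_le_compat_r; lra. Qed.

Lemma form_exists phi BP L sl A q n F i j : phimodel phi BP L sl A ->
  is_primitive (fun s => phi s * chi q n s) F -> (j <= 2^i)%nat -> ~ (j = 0 /\ 1 <= i)%nat ->
  exists a mid b e ca cm cb,
    coef F (Z.of_nat i) j = RInt (fun s => phi s * chi q n s) a mid + e * RInt (fun s => phi s * chi q n s) mid b
    /\ 0 <= a /\ a <= mid /\ mid <= b /\ b <= 1 /\ Rabs e = 1 /\ b - a = / 2^i
    /\ a = INR ca / 2^(S i) /\ mid = INR cm / 2^(S i) /\ b = INR cb / 2^(S i).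
Proof. intros HM HF Hj Hn. destruct j as [|j'].
  - assert (i = 0%nat) by lia. subst i.
    exists 0, (1/2), 1, 1, 0%nat, 1%nat, 2%nat. change (Z.of_nat 0) with 0%Z. rewrite (coef_form0 phi BP L sl A q n F HM HF).
    rewrite Rabs_R1. simpl. repeat split; try lra.
  - set (j := S j'). assert (1 <= j)%nat by (unfold j; lia).
    exists (t0 i j), (t1 i j), (t2 i j), (-1), (2*(j-1))%nat, (2*j-1)%nat, (2*j)%nat.
    rewrite (coef_form1 phi BP L sl A q n F i j HM HF) by auto.
    pose proof (t0_nonneg i j H). destruct (t_order i j).
    pose proof (pow2_pos (S i)). assert (0 < / 2 ^ S i) by (apply Rinv_0_lt_compat; lra).
    assert (t2 i j <= 1) by (unfold t2; apply pow2_le1; auto).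
    assert (Rabs (-1) = 1) by (unfold Rabs; destruct Rcase_abs; lra). repeat split; try lra.
    all: first [ apply t0_rep; auto | apply t1_rep; auto | apply t2_rep
               | unfold t0, t2; field; apply pow_nonzero; lra ].
Qed.

Lemma core (pZ : Z) (L : nat) (A : R) phi BP sl (q : nat) n F (i : Z) j :
  phimodel phi BP L sl A -> is_primitive (fun s => phi s * chi q n s) F ->
  (n <= 2 ^ q)%nat -> index_ok i j ->
  Z.of_nat L = (pZ + 1)%Z -> 0 <= A <= powerRZ 2 pZ -> (-1 <= pZ)%Z ->
  ((0 <= pZ)%Z -> exists lo hi, 0 <= lo /\ lo <= hi /\ hi <= 1 /\ hi - lo <= powerRZ 2 (- pZ) /\
      forall s, 0 <= s <= 1 -> s < lo \/ hi < s -> phi s = 0) ->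
  (~ ((pZ < Z.of_nat q)%Z /\ Z.of_nat q = i) ->
     Rabs (coef F i j)
       <= powerRZ 2 (- 2 * Z.max (Z.max i pZ) (Z.of_nat q) + pZ + Z.of_nat q)) /\
  (((pZ < Z.of_nat q)%Z /\ Z.of_nat q = i) -> Rabs (coef F i j) <= 1).
Proof.
  intros HM HF Hqn Hij HL HA Hp Hsupp.
  assert (Hpos : forall z, 0 <= powerRZ 2 z) by (intros; apply powerRZ_le; lra).
  destruct Hij as [[-> ->] | [Hi0 Hj]].
  { rewrite (coef_m1 phi BP L sl A q n F 0 HM HF), Rabs_R0. split; intros; auto; lra. }
  set (i' := Z.to_nat i) in Hj. replace i with (Z.of_nat i') by lia. clearbody i'. clear Hi0 i.
  destruct (Nat.eq_dec j 0) as [Hj0|Hj0]; [destruct (le_lt_dec 1 i') as [Hi1|Hi1]|].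
  1: { subst j. rewrite (coef_zero phi BP L sl A q n F i' HM HF Hi1), Rabs_R0. split; intros; auto; lra. }
  all: destruct (lt_dec q i') as [Hqi|Hqi]; [destruct (Z_lt_le_dec pZ (Z.of_nat i')) as [Hpi|Hpi];
       [ assert (1 <= j)%nat by lia;
       rewrite (coef_form1 phi BP L sl A q n F i' j HM HF) by auto;
       split; [intros _|intros [_ Hc]; lia];
       apply (Rle_trans _ _ _ (BndX phi BP L sl A q n i' j HM H Hj ltac:(lia) ltac:(lia)));
       apply (Rle_trans _ _ _ (bX A pZ q i' HA)); apply pz_mono; lia | ] | ].
  all: assert (NJ : ~ (j = 0 /\ 1 <= i')%nat) by lia.
  all: destruct (form_exists phi BP L sl A q n F i' j HM HF Hj NJ)
         as (a & mid & b & e & ca & cm & cb & Hco & Ha & Ham & Hmb & Hb & He & Hba & Ea & Em & Eb).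
  all: rewrite Hco; clear Hco.
  all: assert (G1 := Bnd_gen phi BP L sl A q n a mid b e HM Ha Ham Hmb Hb He).
  all: destruct (Z_le_gt_dec (Z.of_nat i') pZ) as [Hip|Hip];
       [destruct (Z_le_gt_dec (Z.of_nat q) pZ) as [Hqp|Hqp]; [ destruct (Hsupp ltac:(lia)) as (lo & hi & Hlo & Hlh & Hhi & Hd & Hz);
       assert (G2 := Bnd2 phi BP L sl A q n a b lo hi HM ltac:(lra) ltac:(lra) Hb Hlo Hlh Hhi Hz);
       assert (G3 := b2 pZ q (hi - lo) Hd);
       split; [intros _|intros [Hc _]; lia];
       eapply Rle_trans; [apply G1|]; eapply Rle_trans; [apply G2|];
       eapply Rle_trans; [apply G3|]; apply pz_mono; lia | ] | ].
  all: destruct (Nat.eq_dec q i') as [Hqi'|Hqi'];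
       [ (assert (G2 := Bnd1 phi BP L sl A q n a b HM ltac:(lra) ltac:(lra) Hb);
       rewrite Hba, b1 in G2; subst q;
       split; [intros Hc; exfalso; apply Hc; split; auto; lia|intros _];
       eapply Rle_trans; [apply G1|]; eapply Rle_trans; [apply G2|];
       replace (Z.of_nat i' - Z.of_nat i')%Z with 0%Z by lia; simpl; lra) | ].
  all: assert (Hiq : (i' < q)%nat) by lia.
  all: split; [intros _|intros [_ Hc]; lia].
  all: destruct (Nat.eq_dec n 0) as [Hn0|Hn0];
       [ subst n;
       assert (Zq : forall s, phi s * chi q 0 s = 0) by (intros s; unfold chi; destruct q; [lia|ring]);
       assert (Zc : forall x y, x <= y -> @eq R (RInt (fun s => phi s * chi q 0 s) x y) 0)
         by (intros x y Hxy; rewrite (RInt_const_on _ x y 0 Hxy (fun s _ => Zq s)); ring);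
       rewrite !Zc by lra; rewrite Rmult_0_r, Rplus_0_r, Rabs_R0; auto | ].
  all: assert (Hn1 : (1 <= n)%nat) by lia.
  all: assert (DO : forall c, ~ (t0 q n < INR c / 2^(S i') < t2 q n))
         by (intros c; rewrite t0_rep', t2_rep' by auto; apply dy_out; lia).
  all: eapply Rle_trans;
       [apply (BndY phi BP L sl A q n a mid b e HM Hn1 Hqn ltac:(lia) Ha Ham Hmb Hb He);
        [rewrite Ea | rewrite Em | rewrite Eb]; apply DO|].
  all: apply (Rle_trans _ _ _ (bY A pZ q HA)); apply pz_mono; lia.
Qed.

Lemma model_m1 phi : (forall t, phi t = 1) -> phimodel phi [] 0 (fun _ => 0) 0.
Proof. intros H. repeat split.
  - intros s _. rewrite H, Rabs_R1. lra.
  - intros b [].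
  - lra.
  - intros w. rewrite Rabs_R0. lra.
  - intros u v s w _ _ _ _ _. rewrite !H. ring.
Qed.

Lemma model_k phi k m : (forall s, 0 <= s -> phi s = PhiN k m s) ->
  exists BP, phimodel phi BP (S k) (SlN k m) (2^k).
Proof. intros H. destruct m as [|m'].
  - exists []. repeat split.
    + intros s Hs. rewrite H by lra. apply PhiN_bound; auto.
    + intros b [].
    + apply pow_le; lra.
    + intros; apply SlN_bound.
    + intros u v s w Hu Hv _ Hs Hw. rewrite !H by lra. unfold PhiN, SlN. destruct k; ring.
  - set (m := S m'). assert (Hm : (1 <= m)%nat) by (unfold m; lia).
    exists [t0 k m; t1 k m; t2 k m]. repeat split.
    + intros s Hs. rewrite H by lra. apply PhiN_bound; auto.
    + intros b Hb. simpl in Hb. destruct Hb as [<-|[<-|[<-|[]]]].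
      * exists (2*(m-1))%nat. apply t0_rep; auto.
      * exists (2*m-1)%nat. apply t1_rep; auto.
      * exists (2*m)%nat. apply t2_rep.
    + apply pow_le; lra.
    + intros; apply SlN_bound.
    + intros u v s w Hu Hv Hl Hs Hw. rewrite !H by lra.
      apply (PhiN_agree k m u v); auto; apply Hl; simpl; tauto.
Qed.

Lemma supp_k phi k m : (m <= 2^k)%nat -> (forall s, 0 <= s -> phi s = PhiN k m s) ->
  exists lo hi, 0 <= lo /\ lo <= hi /\ hi <= 1 /\ hi - lo <= powerRZ 2 (- Z.of_nat k) /\
      forall s, 0 <= s <= 1 -> s < lo \/ hi < s -> phi s = 0.
Proof. intros Hm2 H. pose proof (powerRZ_lt 2 (- Z.of_nat k) ltac:(lra)). destruct m as [|m'].
  - destruct k.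
    + exists 0, 1. simpl. repeat split; try lra. intros s Hs Hs'. lra.
    + exists 0, 0. repeat split; try lra. intros s Hs _. rewrite H by lra. reflexivity.
  - set (m := S m') in *. assert (Hm : (1 <= m)%nat) by (unfold m; lia).
    exists (t0 k m), (t2 k m). pose proof (t0_nonneg k m Hm). destruct (t_order k m).
    pose proof (pow2_pos (S k)). assert (0 < / 2 ^ S k) by (apply Rinv_0_lt_compat; lra).
    repeat split; try lra.
    + unfold t2. apply pow2_le1; auto.
    + rewrite <- P2. unfold t0, t2. right. field. apply pow_nonzero; lra.
    + intros s Hs Hs'. rewrite H by lra. apply PhiN_zero; auto. lra.
Qed.

Theorem mainTheorem4 (i p : Z) (q : nat) (j m n : nat)
  (Hij : index_ok i j) (Hpm : index_ok p m) (Hqn : (n <= 2 ^ q)%nat)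
  (phi F : R -> R)
  (Hphi : is_schauder p m phi)
  (HF : is_primitive (fun s => phi s * chi q n s) F) :
  (~ ((p < Z.of_nat q)%Z /\ Z.of_nat q = i) ->
     Rabs (coef F i j)
       <= powerRZ 2 (- 2 * Z.max (Z.max i p) (Z.of_nat q) + p + Z.of_nat q)) /\
  (((p < Z.of_nat q)%Z /\ Z.of_nat q = i) -> Rabs (coef F i j) <= 1).
Proof.
  destruct Hpm as [[-> ->] | [Hp0 Hm]].
  - unfold is_schauder in Hphi. simpl in Hphi.
    apply (core (-1) 0 0 phi [] (fun _ => 0) q n F i j (model_m1 phi Hphi) HF Hqn Hij); try lia.
    split; [lra|]. apply powerRZ_le; lra.
  - set (k := Z.to_nat p) in Hm. assert (Ep : p = Z.of_nat k) by lia. clearbody k. subst p.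
    unfold is_schauder in Hphi.
    replace (Z.eqb (Z.of_nat k) (-1)) with false in Hphi by (symmetry; apply Z.eqb_neq; lia).
    rewrite Nat2Z.id in Hphi. cbv iota in Hphi. unfold is_primitive in Hphi.
    assert (HP : forall s, 0 <= s -> phi s = PhiN k m s).
    { intros s Hs. destruct (phi_formula k m s Hs) as [X E].
      rewrite (Hphi s (ex_RInt_Reals_0 _ _ _ X)), <- (RInt_Reals _ _ _ (ex_RInt_Reals_0 _ _ _ X)). exact E. }
    destruct (model_k phi k m HP) as [BP HM].
    apply (core (Z.of_nat k) (S k) (2^k) phi BP (SlN k m) q n F i j HM HF Hqn Hij); try lia.
    + rewrite P1. split; [apply powerRZ_le|]; lra.
    + intros _. apply (supp_k phi k m); auto.
Qed.
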